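(* Every transition diagram satisfying conditions (1)–(5) below has at least three and at most six short loops.
   Context: A transition diagram is a relation $\to$ on cells $(i,j)$, $i,j\in\{1,2,3\}$, such that for every $j$ and $i\ne i'$ exactly one of $(i,j)\to(i',j)$, $(i',j)\to(i,j)$ holds, for every $i$ and $j\ne j'$ exactly one of $(i,j)\to(i,j')$, $(i,j')\to(i,j)$ holds, and no other pairs are related. Conditions: (1) no row has horizontal arrows forming a directed 3-cycle and no column has vertical arrows forming a directed 3-cycle; (2) there are no $i\ne i'$ with $(i,j)\to(i',j)$ for all $j$, and no $j\ne j'$ with $(i,j)\to(i,j')$ for all $i$; (3) no cell all of whose four incident arrows point into it; (4) no cell all of whose four incident arrows point out of it; (5) no alternating cycle, i.e. no sequence of cells $(i_0,j_0),\dots,(i_n,j_n)=(i_0,j_0)$, consecutive ones differing in exactly one coordinate, which follows the arrows on all vertical steps and goes against them on all horizontal steps, or vice versa. A short loop is a directed loop $(i,j)\to(i',j)\to(i',j')\to(i,j')\to(i,j)$ with $i\ne i'$, $j\ne j'$; the number of short loops is the number of the nine $2\times2$ blocks $\{i,i'\}\times\{j,j'\}$ whose four arrows form such a loop. *)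

(* Defs.v *)
From mathcomp Require Import all_boot.
Set Implicit Arguments. Unset Strict Implicit. Unset Printing Implicit Defensive.

(* Cells (i,j) with i (row), j (column) in {1,2,3}, encoded as 'I_3 * 'I_3. *)
Definition cell := ('I_3 * 'I_3)%type.

Definition vstep (c d : cell) : bool := (c.2 == d.2) && (c.1 != d.1).
Definition hstep (c d : cell) : bool := (c.1 == d.1) && (c.2 != d.2).
Definition adjacent (c d : cell) : bool := vstep c d || hstep c d.

Definition transition_diagram (R : rel cell) : Prop :=
  (forall (j i i' : 'I_3), i != i' -> R (i, j) (i', j) = ~~ R (i', j) (i, j)) /\
  (forall (i j j' : 'I_3), j != j' -> R (i, j) (i, j') = ~~ R (i, j') (i, j)) /\
  (forall c d : cell, R c d -> adjacent c d).

Definition cond1 (R : rel cell) : Prop :=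
  (~ exists (i j1 j2 j3 : 'I_3),
       [&& j1 != j2, j2 != j3, j1 != j3,
           R (i, j1) (i, j2), R (i, j2) (i, j3) & R (i, j3) (i, j1)]) /\
  (~ exists (j i1 i2 i3 : 'I_3),
       [&& i1 != i2, i2 != i3, i1 != i3,
           R (i1, j) (i2, j), R (i2, j) (i3, j) & R (i3, j) (i1, j)]).

Definition cond2 (R : rel cell) : Prop :=
  (~ exists (i i' : 'I_3), i != i' /\ forall j : 'I_3, R (i, j) (i', j)) /\
  (~ exists (j j' : 'I_3), j != j' /\ forall i : 'I_3, R (i, j) (i, j')).

Definition cond3 (R : rel cell) : Prop :=
  ~ exists c : cell, forall d : cell, adjacent c d -> R d c.

Definition cond4 (R : rel cell) : Prop :=
  ~ exists c : cell, forall d : cell, adjacent c d -> R c d.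

Definition alt_vh (R : rel cell) : rel cell :=
  fun c d => (vstep c d && R c d) || (hstep c d && R d c).
Definition alt_hv (R : rel cell) : rel cell :=
  fun c d => (hstep c d && R c d) || (vstep c d && R d c).

Definition alternating_cycle (R : rel cell) : Prop :=
  exists (c0 : cell) (s : seq cell),
    [/\ s != [::], last c0 s = c0 & path (alt_vh R) c0 s || path (alt_hv R) c0 s].

Definition cond5 (R : rel cell) : Prop := ~ alternating_cycle R.

Definition short_loop (R : rel cell) (i j i' j' : 'I_3) : bool :=
  [&& i != i', j != j',
      R (i, j) (i', j), R (i', j) (i', j'), R (i', j') (i, j') & R (i, j') (i, j)].

Definition block_loop (R : rel cell) (i i' j j' : 'I_3) : bool :=
  [|| short_loop R i j i' j', short_loop R i' j i j',
      short_loop R i j' i' j | short_loop R i' j' i j].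

Definition num_short_loops (R : rel cell) : nat :=
  #|[set q : 'I_3 * 'I_3 * 'I_3 * 'I_3 |
      [&& q.1.1.1 < q.1.1.2, q.1.2 < q.2 & block_loop R q.1.1.1 q.1.1.2 q.1.2 q.2]]|.

(* Main.v *)
Require Import Defs.
From mathcomp Require Import all_boot.
From Stdlib Require Import FunctionalExtensionality.

Set Implicit Arguments. Unset Strict Implicit. Unset Printing Implicit Defensive.

Definition o0 : 'I_3 := @Ordinal 3 0 isT.
Definition o1 : 'I_3 := @Ordinal 3 1 isT.
Definition o2 : 'I_3 := @Ordinal 3 2 isT.

Lemma ord3P (i : 'I_3) : [\/ i = o0, i = o1 | i = o2].
Proof.
case: i => [[|[|[|k]]] Hk]; [constructor 1|constructor 2|constructor 3|by []];
  by apply: val_inj.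
Qed.

Definition mkR (b : seq bool) (c d : cell) : bool :=
  let i := nat_of_ord c.1 in let j := nat_of_ord c.2 in
  let i' := nat_of_ord d.1 in let j' := nat_of_ord d.2 in
  if Nat.eqb i i' && negb (Nat.eqb j j') then
    (if Nat.ltb j j' then nth false b (Nat.sub (Nat.add (Nat.mul 3 i) (Nat.add j j')) 1)
     else ~~ nth false b (Nat.sub (Nat.add (Nat.mul 3 i) (Nat.add j j')) 1))
  else if Nat.eqb j j' && negb (Nat.eqb i i') then
    (if Nat.ltb i i' then nth false b (Nat.sub (Nat.add 9 (Nat.add (Nat.mul 3 j) (Nat.add i i'))) 1)
     else ~~ nth false b (Nat.sub (Nat.add 9 (Nat.add (Nat.mul 3 j) (Nat.add i i'))) 1))
  else false.

Definition bitsOf (R : rel cell) : seq bool :=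
  [:: R (o0,o0) (o0,o1); R (o0,o0) (o0,o2); R (o0,o1) (o0,o2);
      R (o1,o0) (o1,o1); R (o1,o0) (o1,o2); R (o1,o1) (o1,o2);
      R (o2,o0) (o2,o1); R (o2,o0) (o2,o2); R (o2,o1) (o2,o2);
      R (o0,o0) (o1,o0); R (o0,o0) (o2,o0); R (o1,o0) (o2,o0);
      R (o0,o1) (o1,o1); R (o0,o1) (o2,o1); R (o1,o1) (o2,o1);
      R (o0,o2) (o1,o2); R (o0,o2) (o2,o2); R (o1,o2) (o2,o2)].

Section Gen.
Variable R : rel cell.
Hypothesis TD : transition_diagram R.

Lemma td_h i j j' : j != j' -> R (i,j) (i,j') = ~~ R (i,j') (i,j).
Proof. by case: TD => _ [H _] /H. Qed.
Lemma td_v j i i' : i != i' -> R (i,j) (i',j) = ~~ R (i',j) (i,j).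
Proof. by case: TD => H _ /H. Qed.
Lemma td_adj c d : R c d -> adjacent c d.
Proof. by case: TD => _ [_ H] /H. Qed.

Lemma R_mkR c d : R c d = mkR (bitsOf R) c d.
Proof.
case: c d => [i j] [i' j'].
case: (ord3P i) => ->; case: (ord3P j) => ->; case: (ord3P i') => ->; case: (ord3P j') => ->;
rewrite /mkR /=;
first [ done
      | (by rewrite (td_h _ (j:=o0)) ?negbK //)
      | (by rewrite (td_h _ (j:=o1)) ?negbK //)
      | (by rewrite (td_h _ (j:=o2)) ?negbK //)
      | (by rewrite td_v ?negbK //)
      | (apply/negbTE/negP => /td_adj; by rewrite /adjacent /vstep /hstep) ].
Qed.

Definition lineok (x y z : bool) := ~~ (x && ~~ y && z) && ~~ (~~ x && y && ~~ z).

Lemma line_row i : cond1 R -> lineok (R (i,o0) (i,o1)) (R (i,o0) (i,o2)) (R (i,o1) (i,o2)).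
Proof.
case=> H _; apply/andP; split; apply/negP => /andP[/andP[hx hy] hz]; apply: H.
- exists i, o0, o1, o2; rewrite hx hz /= td_h //.
- exists i, o0, o2, o1; rewrite hy /= td_h // hz td_h // hx.
Qed.

Lemma line_col j : cond1 R -> lineok (R (o0,j) (o1,j)) (R (o0,j) (o2,j)) (R (o1,j) (o2,j)).
Proof.
case=> _ H; apply/andP; split; apply/negP => /andP[/andP[hx hy] hz]; apply: H.
- exists j, o0, o1, o2; rewrite hx hz /= td_v //.
- exists j, o0, o2, o1; rewrite hy /= td_v // hz td_v // hx.
Qed.
End Gen.

Definition ords : seq 'I_3 := [:: o0; o1; o2].
Lemma mem_ords i : i \in ords.
Proof. by case: (ord3P i) => ->. Qed.
Definition cellsl : seq cell := [seq (i,j) | i <- ords, j <- ords].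
Lemma mem_cells (c : cell) : c \in cellsl.
Proof. by case: c => i j; apply: (allpairs_f (fun i j => (i,j))); apply: mem_ords. Qed.
Definition quads : seq ('I_3 * 'I_3 * 'I_3 * 'I_3) :=
  [seq (x, l) | x <- [seq (y, k) | y <- cellsl, k <- ords], l <- ords].
Lemma mem_quads q : q \in quads.
Proof.
case: q => [[y k] l]; apply: (allpairs_f (fun x l => (x, l))); last exact: mem_ords.
apply: (allpairs_f (fun y k => (y, k))); [exact: mem_cells | exact: mem_ords].
Qed.
Lemma uniq_quads : uniq quads.
Proof. by vm_compute. Qed.

Definition qpred (R : rel cell) (q : 'I_3 * 'I_3 * 'I_3 * 'I_3) : bool :=
  [&& q.1.1.1 < q.1.1.2, q.1.2 < q.2 & block_loop R q.1.1.1 q.1.1.2 q.1.2 q.2].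

Lemma nslE R : num_short_loops R = count (qpred R) quads.
Proof.
rewrite /num_short_loops -size_filter.
have /card_uniqP <- := filter_uniq (qpred R) uniq_quads.
by apply: eq_card => q; rewrite in_set mem_filter mem_quads andbT.
Qed.

Definition c2b (R : rel cell) :=
  ~~ has (fun i => has (fun i' => (i != i') && all (fun j => R (i,j) (i',j)) ords) ords) ords &&
  ~~ has (fun j => has (fun j' => (j != j') && all (fun i => R (i,j) (i,j')) ords) ords) ords.
Definition c3b (R : rel cell) := ~~ has (fun c => all (fun d => adjacent c d ==> R d c) cellsl) cellsl.
Definition c4b (R : rel cell) := ~~ has (fun c => all (fun d => adjacent c d ==> R c d) cellsl) cellsl.
Definition c5b (R : rel cell) :=
  ~~ has (fun i => has (fun i' => has (fun j => has (fun j' =>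
       [&& alt_vh R (i,j) (i',j), alt_vh R (i',j) (i',j'),
           alt_vh R (i',j') (i,j') & alt_vh R (i,j') (i,j)]) ords) ords) ords) ords.

Lemma c2P R : cond2 R -> c2b R.
Proof.
case=> H1 H2; apply/andP; split; apply/negP.
- case/hasP=> i _ /hasP[i' _ /andP[ne /allP h]]; apply: H1; exists i, i'; split=> // j.
  exact: h (mem_ords j).
- case/hasP=> i _ /hasP[i' _ /andP[ne /allP h]]; apply: H2; exists i, i'; split=> // j.
  exact: h (mem_ords j).
Qed.
Lemma c3P R : cond3 R -> c3b R.
Proof.
move=> H; apply/negP => /hasP[c _ /allP h]; apply: H; exists c => d a.
exact: (implyP (h d (mem_cells d)) a).
Qed.
Lemma c4P R : cond4 R -> c4b R.
Proof.
move=> H; apply/negP => /hasP[c _ /allP h]; apply: H; exists c => d a.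
exact: (implyP (h d (mem_cells d)) a).
Qed.
Lemma c5P R : cond5 R -> c5b R.
Proof.
move=> H; apply/negP => /hasP[i _ /hasP[i' _ /hasP[j _ /hasP[j' _ h]]]].
case/and4P: h => h1 h2 h3 h4; apply: H.
exists (i,j), [:: (i',j); (i',j'); (i,j'); (i,j)]; split => //.
by rewrite /= h1 h2 h3 h4.
Qed.

Definition pats : seq (seq bool) :=
  [seq t <- [:: [:: true; true; true]; [:: true; true; false]; [:: true; false; true];
     [:: true; false; false]; [:: false; true; true]; [:: false; true; false];
     [:: false; false; true]; [:: false; false; false]]
   | lineok (nth false t 0) (nth false t 1) (nth false t 2)].

Fixpoint allc (n : nat) (k : seq bool -> bool) : bool :=
  if n is n'.+1 then all (fun p => allc n' (fun s => k (p ++ s))) pats else k [::].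

Fixpoint lok (n : nat) (b : seq bool) : bool :=
  match n, b with
  | 0, b => nilp b
  | n'.+1, x :: y :: z :: r => lineok x y z && lok n' r
  | _, _ => false
  end.

Lemma lok_allc n b k : lok n b -> allc n k -> k b.
Proof.
elim: n b k => [|n IH] [|x [|y [|z r]]] k //.
move=> /andP[hl hr] H0; have H := @allP _ _ pats H0.
have Hp : [:: x; y; z] \in pats by move: hl; case: x; case: y; case: z.
exact: (IH r (fun s => k ([:: x; y; z] ++ s)) hr (H _ Hp)).
Qed.

Definition check (b : seq bool) : bool :=
  let R := mkR b in
  if c3b R then if c4b R then if c2b R then if c5b R then
    (3 <= count (qpred R) quads <= 6) else true else true else true else true.

Lemma all_check : allc 6 check.
Proof. vm_compute. reflexivity. Qed.

Theorem mainTheorem6 (R : rel cell) :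
  transition_diagram R -> cond1 R -> cond2 R -> cond3 R -> cond4 R -> cond5 R ->
  3 <= num_short_loops R <= 6.
Proof.
move=> TD H1 H2 H3 H4 H5.
have Hl : lok 6 (bitsOf R).
  rewrite /=. 
  by rewrite !line_row // !line_col.
have E : R = mkR (bitsOf R).
  by apply: functional_extensionality => c; apply: functional_extensionality => d; apply: R_mkR.
move: (c2P H2) (c3P H3) (c4P H4) (c5P H5).
move: Hl E; move: (bitsOf R) => b Hl E; subst R.
move=> h2 h3 h4 h5.
by have := lok_allc Hl all_check; rewrite /check /= h3 h4 h2 h5 nslE.
Qed.
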